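(* Let $\mathcal{F}\subseteq\mathcal{P}(\omega)$ be compact (as a subset of $2^\omega$). Then $\mathbb{P}_{\mathcal{F}}$ is a closed subset of $\mathcal{K}(\mathcal{F})$ endowed with the Vietoris topology. Consequently $\mathbb{P}_{\mathcal{F}}$ is a compact subspace of $\mathcal{K}(\mathcal{F})$.
   Context: $\omega=\{1,2,3,\dots\}$. Subsets of $\omega$ are identified with their characteristic functions, i.e. with elements of the Cantor space $2^\omega$ (product topology); topological notions (closed, compact) for families $\mathcal{F}\subseteq\mathcal{P}(\omega)$ refer to this identification. A partition is a family $\mathcal{P}\subseteq\mathcal{P}(\omega)$ such that $\emptyset\in\mathcal{P}$, $\bigcup\mathcal{P}=\omega$, and the elements of $\mathcal{P}$ are pairwise disjoint. $\mathbb{P}_\mathcal{F}$ denotes the set of all partitions $\mathcal{P}$ with $\mathcal{P}\subseteq\mathcal{F}$. Every partition is a closed subset of $2^\omega$. For a compact space $X$, $\mathcal{K}(X)$ is the family of closed subsets of $X$ with the Vietoris topology, generated by the sets $\langle U_1,\dots,U_n\rangle=\{K\in\mathcal{K}(X): K\subseteq\bigcup_{i\le n}U_i \text{ and } K\cap U_i\neq\emptyset \text{ for all } i\le n\}$ with $U_i$ open in $X$. *)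

(* Defs.v *)
From HB Require Import structures.
From mathcomp Require Import all_boot all_order all_algebra.
From mathcomp Require Import all_classical all_reals.
From mathcomp Require Import topology cantor.

Set Implicit Arguments.
Unset Strict Implicit.
Unset Printing Implicit Defensive.

Local Open Scope classical_set_scope.

(* Subsets of omega = {1,2,3,...} are identified with points of the Cantor
   space cantor_space = bool^nat (product topology); the coordinate n : nat
   stands for the element n+1 of omega. *)

Definition is_partition (P : set cantor_space) : Prop :=
  [/\ P (fun _ => false),
      (forall n : nat, exists2 A, P A & A n = true) &
      (forall A B, P A -> P B -> A <> B -> forall n : nat, ~~ (A n && B n))].

Definition hyperspace (X : topologicalType) := set_type [set K : set X | closed K].

HB.instance Definition _ (X : topologicalType) := Choice.on (hyperspace X).
HB.instance Definition _ (X : topologicalType) :=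
  isPointed.Build (hyperspace X) (@exist _ _ set0 (mem_set closed0)).

(* The Vietoris set <U_0, ..., U_(n-1)> (n = 0 allowed: it is {empty set}). *)
Definition vietoris_basic (X : topologicalType) (n : nat) (U : nat -> set X)
    : set (hyperspace X) :=
  [set K | (set_val K `<=` \bigcup_(i in [set i | (i < n)%N]) U i) /\
           forall i, (i < n)%N -> set_val K `&` U i !=set0].

Definition vietoris_index (X : topologicalType) : set (nat * (nat -> set X)) :=
  [set nU | forall i, (i < nU.1)%N -> open (nU.2 i)].

HB.instance Definition _ (X : topologicalType) :=
  isSubBaseTopological.Build (hyperspace X) (@vietoris_index X)
    (fun nU => vietoris_basic nU.1 nU.2).

(* Since every
   partition is closed in 2^omega, this is exactly the set of partitions
   contained in F. *)
Definition partitions_in (F : set cantor_space) : set (hyperspace F) :=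
  [set K | is_partition (set_val @` set_val K)].
Arguments partitions_in F : clear implicits.

(* Main.v *)
Require Import Defs.
From HB Require Import structures.
From mathcomp Require Import all_boot all_order all_algebra.
From mathcomp Require Import all_classical all_reals.
From mathcomp Require Import topology cantor finmap.
Local Open Scope classical_set_scope.
Lemma hyp_nbhs (X : topologicalType) (L : hyperspace X) (A : set (hyperspace X)) :
  nbhs L A -> exists E : {fset (nat * (nat -> set X))}, {subset E <= @vietoris_index X} /\
    (\bigcap_(i in [set` E]) vietoris_basic i.1 i.2) L /\
    (\bigcap_(i in [set` E]) vietoris_basic i.1 i.2) `<=` A.
Proof.
rewrite nbhsE => -[B [oB BL] BA].
case: oB => D' sD' BE.
rewrite -BE in BL BA; case: BL => C DC CL.
case: (sD' C DC) => E sE CE.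
exists E; split => //; rewrite CE; split => // K CK; apply: BA; by exists C.
Qed.
Lemma hyper_compact (X : topologicalType) :
  compact [set: X] -> compact [set: hyperspace X].
Proof.
move=> cX; rewrite compact_ultra => U UU _.
have PU : ProperFilter U by apply: ultra_proper.
have FU : Filter U by apply: PU.
pose M (W : set X) : set (hyperspace X) := [set K | set_val K `&` W !=set0].
pose L : set X := [set x | forall W, open W -> W x -> U (M W)].
have cL : closed L.
  rewrite -[L]setCK; apply: open_closedC; rewrite openE => x /= nLx.
  have [W [oW [Wx nU]]] : exists W, open W /\ W x /\ ~ U (M W).
    apply: contrapT => H; apply: nLx => W oW Wx; apply: contrapT => nU.
    by apply: H; exists W.
  apply: (filterS _ (@open_nbhs_nbhs _ _ _ (conj oW Wx))).
  by move=> y Wy Ly; apply: nU; exact: Ly W oW Wy.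
pose Lh : hyperspace X := exist _ L (mem_set cL).
have part1 : forall W, open W -> L `<=` W -> U [set K | set_val K `<=` W].
  move=> W oW LW.
  case: (in_ultra_setVsetC [set K : hyperspace X | set_val K `<=` W] UU) => // hC.
  exfalso.
  pose C := ~` W.
  have cC : compact C.
    by apply: (subclosed_compact _ cX) => //; exact: open_closedC.
  pose G : set_system X := [set A | U [set K | set_val K `&` C `<=` A]].
  have FG : Filter G.
    apply: Build_Filter.
    - by apply: (filterS _ (@filterT _ _ FU)).
    - move=> A B GA GB; apply: (filterS _ (@filterI _ U FU _ _ GA GB)).
      by move=> K [KA KB] x Kx; split; [exact: KA|exact: KB].
    - by move=> A B AB GA; apply: (@filterS _ U FU _ _ _ GA) => K KA x /KA /AB.
  have PG : ProperFilter G.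
    apply: (Build_ProperFilter_ex _ FG) => A GA.
    have [K [KA KnW]] := @filter_ex _ U PU _ (@filterI _ U FU _ _ GA hC).
    have [k [Kk nWk]] : exists k, set_val K k /\ ~ W k.
      by apply: contrapT => H; apply: KnW => k Kk; apply: contrapT => nWk; apply: H; exists k.
    by exists k; apply: KA.
  have GC : G C by apply: (filterS _ (@filterT _ _ FU)) => K _ x [].
  have [x [Cx clx]] := cC G PG GC.
  have nLx : ~ L x by move=> /LW.
  have [W' [oW' [W'x nU]]] : exists W', open W' /\ W' x /\ ~ U (M W').
    apply: contrapT => H; apply: nLx => W2 oW2 W2x; apply: contrapT => nU.
    by apply: H; exists W2.
  have hM : U (~` M W') by case: (in_ultra_setVsetC (M W') UU).
  have GW : G (~` W').
    apply: (filterS _ hM) => K nM k [Kk _] W'k; apply: nM; by exists k.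
  have [y [nW'y W'y]] := clx _ _ GW (@open_nbhs_nbhs _ _ _ (conj oW' W'x)).
  exact: nW'y.
have key : forall n (V : nat -> set X), (forall j, (j < n)%N -> open (V j)) ->
    vietoris_basic n V Lh -> U (vietoris_basic n V).
  move=> n V oV [LV LM].
  have h1 : U [set K : hyperspace X | set_val K `<=` \bigcup_(i in [set i | (i < n)%N]) V i].
    apply: part1 => //; apply: bigcup_open => i; exact: oV.
  have h2 : forall m, (m <= n)%N -> U [set K : hyperspace X | forall j, (j < m)%N -> set_val K `&` V j !=set0].
    elim=> [|m IH] hm; first by apply: (filterS _ (@filterT _ _ FU)).
    have hMm : U (M (V m)).
      have [x [Lx Vx]] := LM m hm.
      exact: Lx (V m) (oV m hm) Vx.
    apply: (filterS _ (filterI (IH (ltnW hm)) hMm)) => K [K1 K2] j.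
    rewrite ltnS leq_eqVlt => /orP [/eqP ->|/K1] //.
  by apply: (filterS _ (filterI h1 (h2 n (leqnn n)))) => K [K1 K2]; split.
exists Lh; split => //.
move=> A /hyp_nbhs [E [sE [EL EA]]].
apply: (@filterS _ U FU _ _ EA); apply: filter_bigI => i iE.
apply: key; last exact: EL.
by have := sE i iE; move/set_mem.
Qed.
Lemma X_compact (F : set cantor_space) : compact F -> compact [set: F].
Proof.
move=> cF V PV _.
have FV : Filter V by apply: PV.
have VT : V setT by apply: filterT.
have WF : (set_val @ V) F.
  suff : V (set_val @^-1` F) by [].
  by apply: (filterS _ VT) => x _ /=; case: x => y Hy /=; exact/set_mem.
have [p [Fp clp]] := cF _ _ WF.
exists (@exist _ _ p (mem_set Fp)); split => //.
move=> A B VA; rewrite nbhsE => -[O [oO Ox] OB].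
have [W [oW OE]] : exists W, open W /\ O = set_val @^-1` W.
  by case: oO => W oW <-; exists W.
have : (set_val @` A) `&` W !=set0.
  apply: clp; last by apply: open_nbhs_nbhs; split => //; move: Ox; rewrite OE.
  suff : V (set_val @^-1` (set_val @` A)) by [].
  by apply: (filterS _ VA) => a Aa; exists a.
move=> [_ [[a Aa <-] Wa]]; exists a; split => //; apply: OB; rewrite OE; exact: Wa.
Qed.
Lemma cantor_open_bit (n : nat) (b : bool) : open [set C : cantor_space | C n = b].
Proof.
have pc : continuous (fun C : cantor_space => C n) := @proj_continuous nat (fun _ => bool) n.
have H := (continuousP _).1 pc.
exact: (H [set b] (discrete_open _)).
Qed.
Lemma hyp_basic_open (X : topologicalType) n (U : nat -> set X) :
  (forall i, (i < n)%N -> open (U i)) -> open (vietoris_basic n U).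
Proof.
move=> hU.
exists [set vietoris_basic n U]; last by rewrite bigcup_set1.
move=> _ ->; exists [fset (n, U)]%fset.
  move=> i; rewrite inE => /eqP ->. by apply/mem_set; exact: hU.
by rewrite set_fset1 bigcap_set1.
Qed.

Lemma nbhs_sub (X : topologicalType) (K : hyperspace X) (W : set X) :
  open W -> set_val K `<=` W -> nbhs K [set K' : hyperspace X | set_val K' `<=` W].
Proof.
move=> oW KW.
have [[k Kk]|K0] := pselect (set_val K !=set0).
- apply: (filterS _ (@open_nbhs_nbhs _ _ (vietoris_basic 1 (fun _ => W)) _)).
    by move=> K' [K'1 _] x /K'1 [i _ Wx].
  split; first by apply: hyp_basic_open.
  split; first by move=> x Kx; exists 0%N => //; exact: KW.
  by move=> i _; exists k; split => //; exact: KW.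
- apply: (filterS _ (@open_nbhs_nbhs _ _ (vietoris_basic 0 (fun _ => W)) _)).
    by move=> K' [K'1 _] x /K'1 [i].
  split; first by apply: hyp_basic_open.
  by split=> // x Kx; exfalso; apply: K0; exists x.
Qed.

Lemma nbhs_meet (X : topologicalType) (K : hyperspace X) (W : set X) :
  open W -> set_val K `&` W !=set0 ->
  nbhs K [set K' : hyperspace X | set_val K' `&` W !=set0].
Proof.
move=> oW hK.
pose V := fun i : nat => if i == 0%N then W else setT.
apply: (filterS _ (@open_nbhs_nbhs _ _ (vietoris_basic 2 V) _)).
  by move=> K' [_ K'2]; exact: (K'2 0%N isT).
split.
  by apply: hyp_basic_open => i _; rewrite /V; case: ifP => _ //; exact: openT.
split; first by move=> x Kx; exists 1%N.
case: hK => k [Kk Wk].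
by case=> [|[|i]] //= _; exists k.
Qed.

Arguments nbhs_sub {X K W}.
Arguments nbhs_meet {X K W}.

Lemma X_open_pre' {F : set cantor_space} {V : set cantor_space} :
  open V -> @open F (set_val @^-1` V).
Proof. move=> oV. by exists V. Qed.

Lemma partitions_closed (F : set cantor_space) : closed (partitions_in F).
Proof.
move=> K clK.
rewrite /partitions_in /=.
set S := set_val @` set_val K.
have use : forall B, nbhs K B -> exists K', partitions_in F K' /\ B K'.
  by move=> B /clK [K' [PK' BK']]; exists K'.
split.
- apply: contrapT => nS0.
  pose W0 := \bigcup_(n in [set: nat]) [set C : cantor_space | C n = true].
  have oW0 : open W0 by apply: bigcup_open => n _; exact: cantor_open_bit.
  have KW : set_val K `<=` set_val @^-1` W0.
    move=> k Kk /=; apply: contrapT => nW; apply: nS0.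
    have -> : (fun _ : nat => false) = set_val k.
      apply: funext => n /=; apply/esym; apply/negbTE/negP => kn.
      by apply: nW; exists n.
    by exists k.
  have [K' [PK' K'W]] := use _ (nbhs_sub (X_open_pre' oW0) KW).
  case: PK' => [[k K'k kE] _ _].
  by have [n _] := K'W k K'k; rewrite kE.
- move=> n; apply: contrapT => nS.
  have KW : set_val K `<=` set_val @^-1` [set C : cantor_space | C n = false].
    move=> k Kk /=; apply: contrapT => kn; apply: nS; exists (set_val k).
      by exists k.
    by move: kn; case: (set_val k n).
  have [K' [PK' K'W]] := use _ (nbhs_sub (X_open_pre' (cantor_open_bit n false)) KW).
  case: PK' => [_ /(_ n) [A [k K'k <-] kn] _].
  by have := K'W k K'k; rewrite /= kn.
- move=> A B [a Ka <-] [b Kb <-] ab n; apply/negP => /andP [an bn].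
  have [m abm] : exists m, set_val a m <> set_val b m.
    apply: contrapT => H; apply: ab; apply: funext => m.
    by apply: contrapT => H'; apply: H; exists m.
  pose VA := [set C : cantor_space | C n = true] `&` [set C | C m = set_val a m].
  pose VB := [set C : cantor_space | C n = true] `&` [set C | C m = set_val b m].
  have oVA : open VA by apply: openI; exact: cantor_open_bit.
  have oVB : open VB by apply: openI; exact: cantor_open_bit.
  have nA := nbhs_meet (X_open_pre' oVA) (ex_intro _ a (conj Ka (conj an erefl))).
  have nB := nbhs_meet (X_open_pre' oVB) (ex_intro _ b (conj Kb (conj bn erefl))).
  have [K' [PK' [[a' [K'a' [a'n a'm]]] [b' [K'b' [b'n b'm]]]]]] := use _ (filterI nA nB).
  case: PK' => [_ _ /(_ (set_val a') (set_val b'))] H.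
  have : ~~ (set_val a' n && set_val b' n).
    apply: H; [by exists a'|by exists b'|].
    by move=> e; apply: abm; rewrite -a'm -b'm e.
  by rewrite a'n b'n.
Qed.

Theorem mainTheorem1 (F : set cantor_space) :
  compact F ->
  closed (partitions_in F) /\ compact (partitions_in F).
Proof.
move=> cF; have cP := partitions_closed F; split => //.
by apply: (subclosed_compact cP (hyper_compact _ (X_compact F cF))).
Qed.
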